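(* Let $n,m\in\mathbb{N}$ be coprime and $\beta\in\mathbb{C}$. Then for every $u\in S(n,\beta)$, $\hat H_{n,m}u=u|_0\sum_{A\in X_m^\star}A$.
   Context: $\Gamma_0(n)=\{\begin{pmatrix}a&b\\c&d\end{pmatrix}\in SL(2,\mathbb{Z}):n\mid c\}$; $S(n,\beta)$ is the space of Maass cusp forms for $\Gamma_0(n)$ with spectral parameter $\beta$. $(f|_0h)(z)=f(hz)$, extended linearly. $B_m=\begin{pmatrix}m&0\\0&1\end{pmatrix}$. $\{R_j^{nm,n}\}_{j\in I_{nm,n}}$ is a system of representatives of the right cosets $\Gamma_0(nm)\backslash\Gamma_0(n)$ and $\hat H_{n,m}u=(u|_0B_m)|_0\sum_jR_j^{nm,n}$. $X_m^\star=\{\begin{pmatrix}c&b\\0&m/c\end{pmatrix}:c\ge1,\ c\mid m,\ 0\le b\le m/c-1,\ \gcd(c,b,m/c)=1\}$. *)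

(* Defs.v *)
From HB Require Import structures.
From mathcomp Require Import all_boot all_order all_algebra.
From mathcomp Require Import all_classical all_reals all_analysis.
From mathcomp Require Import complex.
Set Implicit Arguments. Unset Strict Implicit. Unset Printing Implicit Defensive.
Import Order.TTheory GRing.Theory Num.Theory.
Import numFieldNormedType.Exports.
Local Open Scope classical_set_scope.
Local Open Scope ring_scope.

Definition mx2 (a b c d : int) : 'M[int]_2 :=
  \matrix_(i < 2, j < 2)
    if i == 0 then (if j == 0 then a else b) else (if j == 0 then c else d).

Definition SL2Z (A : 'M[int]_2) : bool := \det A == 1.

Definition Gamma0 (n : nat) (A : 'M[int]_2) : bool :=
  let c := A 1 0 in SL2Z A && (n%:Z %| c)%Z.

Definition Bm (m : nat) : 'M[int]_2 := mx2 m%:Z 0 0 1.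

Section Action.
Variable R : realType.

Definition mobius (A : 'M[int]_2) (z : R[i]) : R[i] :=
  ((A 0 0)%:~R * z + (A 0 1)%:~R) / ((A 1 0)%:~R * z + (A 1 1)%:~R).

Definition slash0 (f : R[i] -> R[i]) (A : 'M[int]_2) : R[i] -> R[i] :=
  fun z => f (mobius A z).

(* linear extension to formal sums  sum_{A <- s} A  (s a finite list) *)
Definition slash0_sum (f : R[i] -> R[i]) (s : seq 'M[int]_2) : R[i] -> R[i] :=
  fun z => \sum_(A <- s) slash0 f A z.

Local Open Scope complex_scope.

Definition reP (u : R[i] -> R[i]) (x y : R) : R := complex.Re (u (x +i* y)).
Definition imP (u : R[i] -> R[i]) (x y : R) : R := complex.Im (u (x +i* y)).

Definition dx (f : R -> R -> R) (x y : R) : R := derive1 (fun t => f t y) x.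
Definition dy (f : R -> R -> R) (x y : R) : R := derive1 (fun t => f x t) y.

Definition upper (p : R * R) : Prop := 0 < p.2.

Definition C2_upper (f : R -> R -> R) : Prop :=
  (forall x y, 0 < y ->
     derivable (fun t => f t y) x 1 /\ derivable (fun t => f x t) y 1 /\
     derivable (fun t => dx f t y) x 1 /\ derivable (fun t => dx f x t) y 1 /\
     derivable (fun t => dy f t y) x 1 /\ derivable (fun t => dy f x t) y 1)
  /\ {within upper, continuous (fun p : R * R => dx (dx f) p.1 p.2)}
  /\ {within upper, continuous (fun p : R * R => dy (dx f) p.1 p.2)}
  /\ {within upper, continuous (fun p : R * R => dx (dy f) p.1 p.2)}
  /\ {within upper, continuous (fun p : R * R => dy (dy f) p.1 p.2)}.

Definition hlap (f : R -> R -> R) (x y : R) : R :=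
  - (y ^+ 2) * (dx (dx f) x y + dy (dy f) x y).

(* A cusp form is a C^2 (hence smooth, by
   elliptic regularity) Gamma_0(n)-invariant eigenfunction of Delta on the
   upper half plane which is bounded and whose constant terms at all cusps
   vanish: for every gamma in SL(2,Z), int_0^n u(gamma(x+iy)) dx = 0
   (x |-> u(gamma(x + iy)) is n-periodic since gamma T^n gamma^-1 is in
   Gamma(n) <= Gamma_0(n)). *)
Definition maass_cusp_form (n : nat) (beta : R[i]) (u : R[i] -> R[i]) : Prop :=
  [/\ (forall A z, Gamma0 n A -> 0 < complex.Im z -> u (mobius A z) = u z),
      C2_upper (reP u) /\ C2_upper (imP u),
      (forall x y, 0 < y ->
         (hlap (reP u) x y) +i* (hlap (imP u) x y)
         = (4%:R^-1 - beta ^+ 2) * u (x +i* y)),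
      (exists M : R, forall z, 0 < complex.Im z ->
         `|complex.Re (u z)| <= M /\ `|complex.Im (u z)| <= M)
    & (forall (g : 'M[int]_2) (y : R), SL2Z g -> 0 < y ->
         (\int[lebesgue_measure]_(x in `[0, n%:R]) complex.Re (u (mobius g (x +i* y))) = 0)%R
         /\ (\int[lebesgue_measure]_(x in `[0, n%:R]) complex.Im (u (mobius g (x +i* y))) = 0)%R)].

End Action.

Definition right_coset_reps (n m : nat) (I : finType) (R_ : I -> 'M[int]_2) : Prop :=
  (forall j, Gamma0 n (R_ j)) /\
  (forall g, Gamma0 n g ->
     exists! j, exists h, Gamma0 (n * m) h /\ g = h *m R_ j).

(* X_m^* = { (c b; 0 m/c) : c >= 1, c | m, 0 <= b <= m/c - 1, gcd(c,b,m/c) = 1 }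
   (listed without repetition) *)
Definition Xstar (m : nat) : seq 'M[int]_2 :=
  [seq mx2 cb.1%:Z cb.2%:Z 0 (m %/ cb.1)%:Z
  | cb <- [seq (c, b) | c <- divisors m, b <- iota 0 (m %/ c)]
  & gcdn (gcdn cb.1 cb.2) (m %/ cb.1) == 1%N].

Definition Hhat (R : realType) (n m : nat) (I : finType) (R_ : I -> 'M[int]_2)
  (u : R[i] -> R[i]) : R[i] -> R[i] :=
  fun z => \sum_(j : I) slash0 (slash0 u (Bm m)) (R_ j) z.

(* Main.v *)
Require Import Defs.
From HB Require Import structures.
From mathcomp Require Import all_boot all_order all_algebra.
From mathcomp Require Import all_classical all_reals all_analysis.
From mathcomp Require Import complex.
From mathcomp Require Import zify ring lra.
Import Order.TTheory GRing.Theory Num.Theory.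

Lemma pi_mem p n : (p \in \pi(n)) = [&& prime p, 0 < n & p %| n].
Proof. by rewrite -mem_primes. Qed.

Lemma coprime_by_primes a N : 0 < N ->
  (forall p, prime p -> p %| a -> p %| N -> False) -> coprime a N.
Proof.
move=> HN H; rewrite /coprime; apply/negPn/negP => Hg.
have g0 : 0 < gcdn a N by rewrite gcdn_gt0 HN orbT.
have g1 : 1 < gcdn a N by lia.
have pp := pdiv_prime g1.
have pd := pdiv_dvd (gcdn a N).
apply: (H _ pp).
  exact: dvdn_trans pd (dvdn_gcdl _ _).
exact: dvdn_trans pd (dvdn_gcdr _ _).
Qed.

Lemma exists_k (n c b d : nat) : 0 < n -> 0 < c -> 0 < d -> coprime n d ->
  gcdn (gcdn c b) d = 1 -> exists k, coprime (n * b + k * d) (c * n).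
Proof.
move=> Hn Hc Hd Hnd Hg.
set N := c * n.
have HN : 0 < N by rewrite muln_gt0 Hc Hn.
set pi := [pred p : nat | ~~ (p %| n * b)].
exists (N`_pi).
apply: coprime_by_primes => // p pp ps pN.
have Hk : (p %| N`_pi) = (p \in pi).
  have := pi_of_part pi HN p; rewrite !inE !pi_mem pp pN HN part_gt0 /=.
  by [].
case: (boolP (p %| n * b)) => Hnb.
2:{ exfalso; apply: (negP Hnb).
  have Hpk : p %| N`_pi by rewrite Hk inE Hnb.
  by move: ps; rewrite (dvdn_addl _ (dvdn_mulr d Hpk)). }
have pkd : p %| N`_pi * d by move: ps; rewrite (dvdn_addr _ Hnb).
rewrite Euclid_dvdM // Hk inE Hnb /= in pkd.
rewrite Euclid_dvdM // in Hnb.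
case/orP: Hnb => [pn|pb].
  have : p %| gcdn n d by rewrite dvdn_gcd pn pkd.
  by rewrite (eqP Hnd) dvdn1 => /eqP p1; rewrite p1 in pp.
have pnn : ~~ (p %| n).
  apply/negP => pn.
  have : p %| gcdn n d by rewrite dvdn_gcd pn pkd.
  by rewrite (eqP Hnd) dvdn1 => /eqP p1; rewrite p1 in pp.
have pc : p %| c by move: pN; rewrite /N Euclid_dvdM // (negbTE pnn) orbF.
have : p %| gcdn (gcdn c b) d by rewrite !dvdn_gcd pc pb pkd.
by rewrite Hg dvdn1 => /eqP p1; rewrite p1 in pp.
Qed.

Local Open Scope ring_scope.

Lemma mx2E (A : 'M[int]_2) : A = mx2 (A 0 0) (A 0 1) (A 1 0) (A 1 1).
Proof.
apply/matrixP=> i j; rewrite !mxE.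
case: i => [[|[|//]] Hi]; case: j => [[|[|//]] Hj] /=;
  by congr (A _ _); apply/val_inj.
Qed.

Lemma mx2_00 a b c d : mx2 a b c d 0 0 = a. Proof. by rewrite mxE. Qed.
Lemma mx2_01 a b c d : mx2 a b c d 0 1 = b. Proof. by rewrite mxE. Qed.
Lemma mx2_10 a b c d : mx2 a b c d 1 0 = c. Proof. by rewrite mxE. Qed.
Lemma mx2_11 a b c d : mx2 a b c d 1 1 = d. Proof. by rewrite mxE. Qed.

Lemma mul_mx2 a b c d a' b' c' d' :
  mx2 a b c d *m mx2 a' b' c' d' =
  mx2 (a*a'+b*c') (a*b'+b*d') (c*a'+d*c') (c*b'+d*d').
Proof.
apply/matrixP=> i j; rewrite !mxE !big_ord_recr big_ord0 /= !mxE /= add0r.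
by case: i => [[|[|//]] Hi]; case: j => [[|[|//]] Hj].
Qed.

Lemma det_mx2 a b c d : \det (mx2 a b c d) = a*d - b*c.
Proof.
rewrite (expand_det_row _ 0) !big_ord_recr big_ord0 /= add0r.
rewrite /cofactor !mxE /= !det_mx11 !mxE /=.
by rewrite expr0 expr1 mul1r mulN1r mulrN.
Qed.

Lemma mx2_inj a b c d a' b' c' d' :
  mx2 a b c d = mx2 a' b' c' d' -> [/\ a = a', b = b', c = c' & d = d'].
Proof.
move=> E.
have := congr1 (fun M : 'M[int]_2 => M 0 0) E; have := congr1 (fun M : 'M[int]_2 => M 0 1) E;
have := congr1 (fun M : 'M[int]_2 => M 1 0) E; have := congr1 (fun M : 'M[int]_2 => M 1 1) E.
by rewrite /= !mxE /=.
Qed.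


Lemma hnf (M : 'M[int]_2) (m : int) : \det M = m -> 0 < m ->
  exists P : 'M[int]_2, exists c b d : int,
    [/\ \det P = 1, P *m M = mx2 c b 0 d, 0 < c, 0 < d & 0 <= b < d].
Proof.
rewrite (mx2E M) det_mx2; move: (M 0 0) (M 0 1) (M 1 0) (M 1 1) => a b c d Hdet Hm.
have gnz : gcdz a c != 0.
  rewrite gcdz_eq0; apply/negP => /andP [/eqP a0 /eqP c0].
  by move: Hm; rewrite -Hdet a0 c0 mul0r mulr0 subr0 ltxx.
have [a' Ha] : exists a', a = a' * gcdz a c by apply/dvdzP; exact: dvdz_gcdl.
have [c' Hc] : exists c', c = c' * gcdz a c by apply/dvdzP; exact: dvdz_gcdr.
have [u [v Huv]] := Bezoutz a c.
move: gnz Ha Hc Huv; move: (gcdz a c) => g gnz Ha Hc Huv.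
subst a c.
have H1 : u * a' + v * c' = 1.
  apply: (mulIf gnz); transitivity (u * (a' * g) + v * (c' * g)); [ring | by rewrite Huv mul1r].
set c0 := u * (a' * g) + v * (c' * g).
set d0 := a' * d - c' * b.
have Hcd : c0 * d0 = m.
  rewrite -Hdet /c0 /d0.
  have -> : u * (a' * g) + v * (c' * g) = g * (u * a' + v * c') by ring.
  rewrite H1; ring.
have [e [He1 Hec Hed]] : exists e : int, [/\ e * e = 1, 0 < e * c0 & 0 < e * d0].
  have c0nz : c0 != 0.
    by apply/eqP => c00; move: Hm; rewrite -Hcd c00 mul0r ltxx.
  case: (ltrP 0 c0) => Hc0.
    exists 1; rewrite !mul1r; split => //.
    by rewrite -(pmulr_rgt0 _ Hc0) Hcd.
  exists (-1); rewrite !mulN1r; split => //.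
    by rewrite oppr_gt0 lt_neqAle c0nz Hc0.
  have Hc0' : 0 < - c0 by rewrite oppr_gt0 lt_neqAle c0nz Hc0.
  by rewrite -(pmulr_rgt0 _ Hc0') mulrNN Hcd.
set q := ((e * (u * b + v * d)) %/ (e * d0))%Z.
exists (mx2 1 (- q) 0 1 *m (mx2 e 0 0 e *m mx2 u v (- c') a')).
exists (e * c0), (((e * (u * b + v * d)) %% (e * d0))%Z), (e * d0).
split => //.
- rewrite !det_mulmx !det_mx2.
  have -> : u * a' - v * - c' = 1 by rewrite -H1; ring.
  rewrite He1; ring.
- rewrite !mul_mx2; congr mx2.
  + rewrite /c0; ring.
  + have := divz_eq (e * (u * b + v * d)) (e * d0); rewrite -/q => E.
    apply: (addrI (q * (e * d0))); rewrite addrC -E /d0; ring.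
  + ring.
  + rewrite /d0; ring.
- have d0nz : e * d0 != 0 by rewrite gt_eqF.
  rewrite modz_ge0 //=.
  have := ltz_mod (e * (u * b + v * d)) d0nz.
  by rewrite gtr0_norm.
Qed.

Lemma t1 (x w : int) : 0 < x -> x * w = 1 -> x = 1 /\ w = 1.
Proof. move=> Hx H. have Hw : 0 < w by rewrite -(pmulr_rgt0 _ Hx) H. nia. Qed.

Lemma t3 (e x : int) : 0 <= e -> e * x = 1 -> e = 1.
Proof.
move=> He H; have e0 : e != 0 by apply/eqP => e0; move: H; rewrite e0 mul0r.
have : 0 < e by rewrite lt_neqAle eq_sym e0 He.
by move=> /t1 /(_ H) [].
Qed.

Definition inv2 (A : 'M[int]_2) : 'M[int]_2 := mx2 (A 1 1) (- A 0 1) (- A 1 0) (A 0 0).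

Lemma one_mx2 : (1%:M : 'M[int]_2) = mx2 1 0 0 1.
Proof.
apply/matrixP=> i j; rewrite !mxE.
by case: i => [[|[|//]] Hi]; case: j => [[|[|//]] Hj].
Qed.

Lemma det_inv2 A : \det (inv2 A) = \det A.
Proof. by rewrite [in RHS](mx2E A) /inv2 !det_mx2; ring. Qed.

Lemma inv2K A : \det A = 1 -> inv2 A *m A = 1%:M.
Proof.
rewrite one_mx2 /inv2 (mx2E A); move: (A 0 0) (A 0 1) (A 1 0) (A 1 1) => a b c d.
rewrite !mx2_00 !mx2_01 !mx2_10 !mx2_11 mul_mx2 det_mx2 => H.
by congr mx2; rewrite -?H; ring.
Qed.

Lemma inv2K' A (X : 'M[int]_2) : \det A = 1 -> inv2 A *m (A *m X) = X.
Proof. by move=> H; rewrite mulmxA inv2K // mul1mx. Qed.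

Lemma G0E n A : Gamma0 n A = (\det A == 1) && (A 1 0 \in dvdz n%:Z).
Proof. by []. Qed.

Lemma G0_mul n A B : Gamma0 n A -> Gamma0 n B -> Gamma0 n (A *m B).
Proof.
rewrite !G0E det_mulmx => /andP [/eqP dA nA] /andP [/eqP dB nB].
rewrite dA dB mulr1 eqxx /= (mx2E A) (mx2E B) mul_mx2 mx2_10.
by rewrite rpredD //; [apply: dvdz_mulr | apply: dvdz_mull].
Qed.

Lemma G0_inv n A : Gamma0 n A -> Gamma0 n (inv2 A).
Proof.
rewrite !G0E det_inv2 => /andP [-> nA] /=.
by rewrite /inv2 mx2_10 rpredN.
Qed.

Lemma coset_uniq (g g' : 'M[int]_2) (c b d c' b' d' : int) :
  \det g = 1 -> \det g' = 1 -> 0 < c -> 0 < c' -> 0 <= b < d -> 0 <= b' < d' ->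
  g *m mx2 c b 0 d = g' *m mx2 c' b' 0 d' -> [/\ c = c', b = b' & d = d'].
Proof.
move=> dg dg' Hc Hc' Hb Hb' E.
have E2 : (inv2 g' *m g) *m mx2 c b 0 d = mx2 c' b' 0 d'.
  by rewrite -mulmxA E inv2K'.
have dh : \det (inv2 g' *m g) = 1 by rewrite det_mulmx det_inv2 dg dg' mulr1.
move: E2 dh; rewrite (mx2E (inv2 g' *m g)).
move: (_ 0 0) (_ 0 1) (_ 1 0) (_ 1 1) => x y z w.
rewrite mul_mx2 det_mx2 => /mx2_inj [e1 e2 e3 e4] dh.
have z0 : z = 0.
  apply/eqP; move: e3; rewrite mulr0 addr0 => /eqP; rewrite mulf_eq0 (gt_eqF Hc) orbF.
  by [].
subst z.
have e1' : x * c = c' by rewrite -e1 mulr0 addr0.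
have Hx : 0 < x by rewrite -(pmulr_lgt0 _ Hc) e1'.
have [x1 w1] : x = 1 /\ w = 1 by apply: t1 => //; rewrite -dh; ring.
subst x w.
have y0 : y = 0 by nia.
subst y; split; rewrite -?e1 -?e2 -?e4; ring.
Qed.

Lemma Bm_mx2 m : Bm m = mx2 m%:Z 0 0 1. Proof. by []. Qed.

Lemma inj_core (n m : nat) (Rj Rk g g' A : 'M[int]_2) : (0 < m)%N ->
  Gamma0 n Rj -> Gamma0 n Rk -> Gamma0 n g -> Gamma0 n g' ->
  Bm m *m Rj = g *m A -> Bm m *m Rk = g' *m A ->
  exists h, Gamma0 (n * m) h /\ Rk = h *m Rj.
Proof.
move=> Hm GRj GRk Gg Gg' Ej Ek.
have Ghh : Gamma0 n (g' *m inv2 g) by apply: G0_mul => //; apply: G0_inv.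
have E : Bm m *m Rk = (g' *m inv2 g) *m (Bm m *m Rj).
  rewrite Ek Ej -mulmxA inv2K' //.
  by move: Gg; rewrite G0E => /andP [/eqP].
move: Ghh E GRj; rewrite !G0E.
move: (g' *m inv2 g) => hh /andP [/eqP dhh nhh].
rewrite (mx2E hh) (mx2E Rj) (mx2E Rk) Bm_mx2 !mul_mx2 !det_mx2 !mx2_10 in dhh nhh *.
move: (hh 0 0) (hh 0 1) (hh 1 0) (hh 1 1) dhh nhh => x y z w dhh nhh.
move: (Rj 0 0) (Rj 0 1) (Rj 1 0) (Rj 1 1) => a b c d.
move: (Rk 0 0) (Rk 0 1) (Rk 1 0) (Rk 1 1) => a1 b1 c1 d1.
move=> /mx2_inj [e1 e2 e3 e4] /andP [/eqP dR nR].
have mnz : (m%:Z != 0) by move: Hm; lia.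
rewrite !mul0r !mul1r !addr0 !add0r in e1 e2 e3 e4.
set t := a * b1 - b * a1.
have Hy : y = m%:Z * t.
  rewrite -[y]mulr1 -dR.
  have -> : m%:Z * t = a * (m%:Z * b1) - b * (m%:Z * a1) by rewrite /t; ring.
  rewrite e1 e2.
  ring.
have [zz Hz] : exists zz, z = zz * n%:Z by apply/dvdzP.
exists (mx2 x t (m%:Z * z) w); split.
  rewrite G0E det_mx2 mx2_10; apply/andP; split.
    by rewrite -dhh Hy; apply/eqP; ring.
  rewrite Hz PoszM; apply/dvdzP; exists zz; ring.
rewrite mul_mx2; congr mx2.
- apply: (mulfI mnz).
  transitivity (m%:Z * a1); first ring.
  rewrite e1 Hy; ring.
- apply: (mulfI mnz).
  transitivity (m%:Z * b1); first ring.
  rewrite e2 Hy; ring.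
- rewrite e3; ring.
- rewrite e4; ring.
Qed.

Lemma XstarP (m : nat) (A : 'M[int]_2) : (0 < m)%N -> A \in Xstar m ->
  exists c b d : nat, [/\ A = mx2 c%:Z b%:Z 0 d%:Z, (c * d = m)%N, (b < d)%N
    & gcdn (gcdn c b) d = 1%N].
Proof.
move=> Hm /mapP [[c b]]; rewrite mem_filter => /andP [/= Hg /allpairsPdep [c' [b' [Hc' Hb' [Ec Eb]]]]] ->.
subst c b => /=.
rewrite -dvdn_divisors // in Hc'.
exists c', b', (m %/ c')%N; split => //.
- by rewrite mulnC divnK.
- by move: Hb'; rewrite mem_iota.
- exact: eqP.
Qed.

Lemma Xstar_mem (m c b d : nat) : (0 < m)%N -> (c * d = m)%N -> (b < d)%N ->
  gcdn (gcdn c b) d = 1%N -> mx2 c%:Z b%:Z 0 d%:Z \in Xstar m.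
Proof.
move=> Hm Hcd Hbd Hg.
have Hc : (0 < c)%N by move: Hm; rewrite -Hcd muln_gt0 => /andP [].
have Hdm : (m %/ c = d)%N by rewrite -Hcd mulKn.
apply/mapP; exists (c, b); last by rewrite /= Hdm.
rewrite mem_filter /= Hdm Hg eqxx /=.
apply/allpairsPdep; exists c, b; split => //.
  rewrite -dvdn_divisors; first by rewrite -Hcd dvdn_mulr.
  by [].
by rewrite Hdm mem_iota.
Qed.

Lemma Xstar_uniq m : uniq (Xstar m).
Proof.
rewrite /Xstar map_inj_in_uniq.
  rewrite filter_uniq // allpairs_uniq_dep //.
  - exact: divisors_uniq.
  - by move=> x _; exact: iota_uniq.
  by move=> [x1 x2] [y1 y2] _ _ /= [-> ->].
move=> [c b] [c' b'] _ _ /= /mx2_inj [e1 e2 _ _].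
by case: e1 => ->; case: e2 => ->.
Qed.

Lemma surj_con (n m c b d : nat) : (0 < n)%N -> (0 < m)%N -> coprime n m ->
  (c * d = m)%N -> gcdn (gcdn c b) d = 1%N ->
  exists gam g0, [/\ Gamma0 n gam, Gamma0 n g0 &
    Bm m *m gam = g0 *m mx2 c%:Z b%:Z 0 d%:Z].
Proof.
move=> Hn Hm Hnm Hcd Hg.
have Hc : (0 < c)%N by move: Hm; rewrite -Hcd muln_gt0 => /andP [].
have Hd : (0 < d)%N by move: Hm; rewrite -Hcd muln_gt0 => /andP [].
have Hnd : coprime n d by apply: coprime_dvdr Hnm; rewrite -Hcd dvdn_mull.
have [k Hk] := @exists_k n c b d Hn Hc Hd Hnd Hg.
set s := (n * b + k * d)%N in Hk.
have [u [v Huv]] := Bezoutz s%:Z (c * n)%N%:Z.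
have Huv1 : u * s%:Z + v * (c * n)%N%:Z = 1.
  by rewrite Huv; apply/eqP; exact: Hk.
exists (mx2 u (- v) (c * n)%N%:Z s%:Z), (mx2 (u * d%:Z) (- v * c%:Z - u * b%:Z) n%:Z k%:Z).
split.
- rewrite G0E det_mx2 mx2_10; apply/andP; split.
    by rewrite -Huv1; apply/eqP; ring.
  by apply/dvdzP; exists c%:Z; rewrite PoszM.
- rewrite G0E det_mx2 mx2_10; apply/andP; split; last exact: dvdzz.
  rewrite -Huv1 /s !PoszD !PoszM; apply/eqP; ring.
- rewrite Bm_mx2 !mul_mx2 -Hcd /s !PoszD !PoszM; congr mx2; ring.
Qed.

Lemma Bm_conj (n m : nat) (h : 'M[int]_2) : Gamma0 (n * m) h ->
  exists h', Gamma0 n h' /\ Bm m *m h = h' *m Bm m.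
Proof.
rewrite G0E (mx2E h) det_mx2 mx2_10.
move: (h 0 0) (h 0 1) (h 1 0) (h 1 1) => x y z w /andP [/eqP dh /dvdzP [t Ht]].
exists (mx2 x (m%:Z * y) (t * n%:Z) w); split.
  rewrite G0E det_mx2 mx2_10; apply/andP; split.
    by rewrite -dh Ht PoszM; apply/eqP; ring.
  by apply/dvdzP; exists t.
rewrite Bm_mx2 !mul_mx2 Ht PoszM; congr mx2; ring.
Qed.

Lemma surj_full (n m : nat) (I : finType) (R_ : I -> 'M[int]_2) (c b d : nat) :
  (0 < n)%N -> (0 < m)%N -> coprime n m -> right_coset_reps n m R_ ->
  (c * d = m)%N -> gcdn (gcdn c b) d = 1%N ->
  exists j g, Gamma0 n g /\ Bm m *m R_ j = g *m mx2 c%:Z b%:Z 0 d%:Z.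
Proof.
move=> Hn Hm Hnm [_ Hrep] Hcd Hg.
have [gam [g0 [Ggam Gg0 E]]] := @surj_con n m c b d Hn Hm Hnm Hcd Hg.
have [j [[h [Gh Eh]] _]] := Hrep _ Ggam.
have [h' [Gh' Eh']] := @Bm_conj n m h Gh.
exists j, (inv2 h' *m g0); split; first by apply: G0_mul => //; apply: G0_inv.
have dh' : \det h' = 1 by move: Gh'; rewrite G0E => /andP [/eqP].
by rewrite -mulmxA -E Eh (mulmxA (Bm m)) Eh' -mulmxA inv2K'.
Qed.

Lemma int_nat (x : int) : 0 <= x -> exists x' : nat, x = x'%:Z.
Proof. by case: x => [x'|k] // _; exists x'. Qed.

Lemma exist_A (n m : nat) (Rj : 'M[int]_2) : (0 < m)%N -> coprime n m -> Gamma0 n Rj ->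
  exists c b d : nat, [/\ (c * d = m)%N, (b < d)%N, gcdn (gcdn c b) d = 1%N &
    exists g, Gamma0 n g /\ Bm m *m Rj = g *m mx2 c%:Z b%:Z 0 d%:Z].
Proof.
move=> Hm Hnm GR.
have dR : \det Rj = 1 by move: GR; rewrite G0E => /andP [/eqP].
have dM : \det (Bm m *m Rj) = m%:Z by rewrite det_mulmx dR Bm_mx2 det_mx2; ring.
have Hm' : 0 < m%:Z by rewrite ltz_nat.
have [P [c [b [d [dP EP Hc Hd /andP [Hb0 Hbd]]]]]] := @hnf _ _ dM Hm'.
have E : Bm m *m Rj = inv2 P *m mx2 c b 0 d by rewrite -EP inv2K'.
have dg : \det (inv2 P) = 1 by rewrite det_inv2.
have Hcd0 : c * d = m%:Z.
  by rewrite -dM E det_mulmx dg det_mx2 mul1r mulr0 subr0.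
have [c' Ec] := @int_nat c (ltW Hc).
have [d' Ed] := @int_nat d (ltW Hd).
have [b' Eb] := @int_nat b Hb0.
subst c d b.
move: GR E dg; rewrite G0E (mx2E Rj) (mx2E (inv2 P)) Bm_mx2 !mul_mx2 !det_mx2 mx2_10.
move: (inv2 P) => g.
move: (g 0 0) (g 0 1) (g 1 0) (g 1 1) => p q r s.
move: (Rj 0 0) (Rj 0 1) (Rj 1 0) (Rj 1 1) => a1 b1 c1 d1.
move=> /andP [/eqP dR' nR] /mx2_inj [e1 e2 e3 e4] dg.
rewrite !mul0r !mul1r !mulr0 !addr0 !add0r in e1 e2 e3 e4.
have Hcd : (c' * d')%N = m.
  by apply/eqP; rewrite -eqz_nat PoszM Hcd0.
exists c', b', d'; split => //.
- set e := gcdn (gcdn c' b') d'.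
  have [x Hx] : exists x, c' = (x * e)%N by apply/dvdnP; rewrite /e (dvdn_trans (dvdn_gcdl _ _)) // dvdn_gcdl.
  have [y Hy] : exists y, b' = (y * e)%N.
    by apply/dvdnP; rewrite /e (dvdn_trans (dvdn_gcdl _ _)) // dvdn_gcdr.
  have [z Hz] : exists z, d' = (z * e)%N by apply/dvdnP; rewrite /e dvdn_gcdr.
  rewrite e3 e4 Hx Hy Hz !PoszM in dR'.
  have : e%:Z * (a1 * (r * y%:Z + s * z%:Z) - b1 * (r * x%:Z)) = 1 by rewrite -dR'; ring.
  move=> H; have He0 : 0 <= e%:Z by rewrite lez_nat.
  by have /eqP := @t3 _ _ He0 H; rewrite eqz_nat => /eqP.
- exists (mx2 p q r s); split.
    rewrite G0E det_mx2 dg eqxx /= mx2_10.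
    have cop : coprimez n c'.
      by apply: (@coprime_dvdr c' m n); rewrite // -Hcd dvdn_mulr.
    by rewrite -(Gauss_dvdzl _ cop) -e3.
  rewrite mul_mx2; congr mx2; rewrite ?e1 ?e2 ?e3 ?e4; ring.
Qed.

Section Cx.
Local Open Scope complex_scope.
Variable R : realType.

Lemma intC (r : int) : (r%:~R : R[i]) = (r%:~R : R)%:C.
Proof. by rewrite rmorph_int. Qed.

Lemma ImCM (k : R) (w : R[i]) : complex.Im (k%:C * w) = k * complex.Im w.
Proof. case: w => x y /=; ring. Qed.

Lemma ImC (k : R) : complex.Im (k%:C) = 0.
Proof. by []. Qed.

Lemma ImD (v w : R[i]) : complex.Im (v + w) = complex.Im v + complex.Im w.
Proof. by case: v; case: w. Qed.

Lemma den_nz (r s : int) (z : R[i]) : 0 < complex.Im z -> (r != 0) || (s != 0) ->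
  r%:~R * z + s%:~R != 0.
Proof.
move=> Hz Hrs; apply/eqP => E.
have EI := congr1 (@complex.Im R) E.
rewrite ImD !intC ImCM ImC addr0 /= in EI.
have r0 : r = 0.
  apply/eqP; move: EI => /eqP; rewrite mulf_eq0 (gt_eqF Hz) orbF intr_eq0. done.
move: E Hrs; rewrite r0 mul0r add0r eqxx /= => /eqP.
by rewrite intr_eq0 => /eqP ->.
Qed.

Lemma mobius_mx2 (a b c d : int) (z : R[i]) :
  mobius (mx2 a b c d) z = (a%:~R * z + b%:~R) / (c%:~R * z + d%:~R).
Proof. by rewrite /mobius !mxE. Qed.

Lemma mob_alg (a b c d p q r s z : R[i]) : r * z + s != 0 ->
  ((a * p + b * r) * z + (a * q + b * s)) / ((c * p + d * r) * z + (c * q + d * s)) =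
  (a * ((p * z + q) / (r * z + s)) + b) / (c * ((p * z + q) / (r * z + s)) + d).
Proof.
move=> H.
have -> : a * ((p * z + q) / (r * z + s)) + b = (a * (p * z + q) + b * (r * z + s)) / (r * z + s).
  by field.
have -> : c * ((p * z + q) / (r * z + s)) + d = (c * (p * z + q) + d * (r * z + s)) / (r * z + s).
  by field.
have -> : (a * p + b * r) * z + (a * q + b * s) = a * (p * z + q) + b * (r * z + s) by ring.
have -> : (c * p + d * r) * z + (c * q + d * s) = c * (p * z + q) + d * (r * z + s) by ring.
case: (eqVneq (c * (p * z + q) + d * (r * z + s)) 0) => HY.
  by rewrite HY !mul0r invr0 !mulr0.
by field; apply/andP.
Qed.

Lemma mobiusM (A B : 'M[int]_2) (z : R[i]) :
  (B 1 0)%:~R * z + (B 1 1)%:~R != 0 ->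
  mobius (A *m B) z = mobius A (mobius B z).
Proof.
rewrite (mx2E A) (mx2E B) mul_mx2 !mobius_mx2 !mxE /=.
move: (A 0 0) (A 0 1) (A 1 0) (A 1 1) (B 0 0) (B 0 1) (B 1 0) (B 1 1) => a b c d p q r s H.
rewrite !rmorphD !rmorphM /=.
exact: mob_alg.
Qed.
Lemma Im_mob_pos (c b d : int) (z : R[i]) : 0 < c -> 0 < d -> 0 < complex.Im z ->
  0 < complex.Im (mobius (mx2 c b 0 d) z).
Proof.
move=> Hc Hd Hz; rewrite mobius_mx2 mul0r add0r !intC -fmorphV mulrC ImCM ImD ImCM ImC addr0.
apply: mulr_gt0; last apply: mulr_gt0 => //.
  by rewrite invr_gt0 ltr0z.
by rewrite ltr0z.
Qed.
End Cx.

Theorem mainTheorem4 (R : realType) (n m : nat) (beta : R[i])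
    (I : finType) (R_ : I -> 'M[int]_2) (u : R[i] -> R[i]) :
  (0 < n)%N -> (0 < m)%N -> coprime n m ->
  right_coset_reps n m R_ ->
  maass_cusp_form n beta u ->
  forall z : R[i], 0 < complex.Im z ->
    Hhat n m R_ u z = slash0_sum u (Xstar m) z.
Proof.
move=> Hn Hm Hnm Hrep Hu z Hz.
case: Hu => Hinv _ _ _ _.
have GR : forall j, Gamma0 n (R_ j) by case: Hrep.
have ex_j : forall j, exists A, A \in Xstar m /\ exists g, Gamma0 n g /\ Bm m *m R_ j = g *m A.
  move=> j; have [c [b [d [Hcd Hbd Hg [g [Gg E]]]]]] := @exist_A n m (R_ j) Hm Hnm (GR j).
  exists (mx2 c%:Z b%:Z 0 d%:Z); split; last by exists g.
  exact: Xstar_mem.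
pose sigma j := proj1_sig (cid (ex_j j)).
have sigmaP : forall j, sigma j \in Xstar m /\ exists g, Gamma0 n g /\ Bm m *m R_ j = g *m sigma j.
  by move=> j; exact: (proj2_sig (cid (ex_j j))).
have dR : forall j, \det (R_ j) = 1 by move=> j; move: (GR j); rewrite G0E => /andP [/eqP].
have term : forall j, slash0 (slash0 u (Bm m)) (R_ j) z = slash0 u (sigma j) z.
  move=> j; rewrite /slash0.
  have [Xj [g [Gg Ej]]] := sigmaP j.
  have [c [b [d [Ec Hcd Hbd Hg]]]] := @XstarP m _ Hm Xj.
  have Hc : (0 < c)%N by move: Hm; rewrite -Hcd muln_gt0 => /andP [].
  have Hd : (0 < d)%N by move: Hm; rewrite -Hcd muln_gt0 => /andP [].
  rewrite -mobiusM; last first.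
    apply: den_nz => //; case: (eqVneq (R_ j 1 0) 0) => r0 //=.
    apply/eqP => s0.
    by move: (dR j); rewrite (mx2E (R_ j)) det_mx2 r0 s0 !mulr0 subr0.
  rewrite Ej mobiusM; last first.
    by apply: den_nz => //; rewrite Ec mx2_11; apply/orP; right; move: Hd; lia.
  apply: Hinv => //.
  rewrite Ec; apply: Im_mob_pos => //; by rewrite ltz_nat.
have sig_inj : injective sigma.
  move=> j k E.
  have [_ [g [Gg Ej]]] := sigmaP j.
  have [_ [g' [Gg' Ek]]] := sigmaP k.
  rewrite -E in Ek.
  have [h [Gh Eh]] := @inj_core n m (R_ j) (R_ k) g g' (sigma j) Hm (GR j) (GR k) Gg Gg' Ej Ek.
  case: Hrep => _ Hrep'.
  have [j0 [_ U]] := Hrep' _ (GR k).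
  have Ujk : j0 = k.
    apply: U; exists 1%:M; split; last by rewrite mul1mx.
    by rewrite G0E det1 eqxx /= mxE /= dvdz0.
  have Ujj : j0 = j by apply: U; exists h.
  by rewrite -Ujj.
have sig_surj : forall A, A \in Xstar m -> exists j, sigma j = A.
  move=> A XA.
  have [c [b [d [EA Hcd Hbd Hg]]]] := @XstarP m _ Hm XA.
  have [j [g [Gg Ej]]] := @surj_full n m I R_ c b d Hn Hm Hnm Hrep Hcd Hg.
  exists j.
  have [Xj [g' [Gg' Ej']]] := sigmaP j.
  have [c' [b' [d' [Ec' Hcd' Hbd' Hg']]]] := @XstarP m _ Hm Xj.
  have dg : \det g = 1 by move: Gg; rewrite G0E => /andP [/eqP].
  have dg' : \det g' = 1 by move: Gg'; rewrite G0E => /andP [/eqP].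
  have Hc : (0 < c)%N by move: Hm; rewrite -Hcd muln_gt0 => /andP [].
  have Hc' : (0 < c')%N by move: Hm; rewrite -Hcd' muln_gt0 => /andP [].
  rewrite Ec' in Ej'.
  have := @coset_uniq g' g c'%:Z b'%:Z d'%:Z c%:Z b%:Z d%:Z dg' dg.
  rewrite !ltz_nat Hc Hc' !lez_nat Hbd Hbd' /= => /(_ isT isT isT isT).
  by rewrite -Ej' -Ej => /(_ erefl) [e1 e2 e3]; rewrite Ec' EA e1 e2 e3.
have Hperm : perm_eq (map sigma (index_enum I)) (Xstar m).
  apply: uniq_perm.
  - by rewrite map_inj_uniq // index_enum_uniq.
  - exact: Xstar_uniq.
  move=> A; apply/mapP/idP.
    by case=> j _ ->; case: (sigmaP j).
  by move=> /sig_surj [j <-]; exists j => //; rewrite mem_index_enum.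
rewrite /Hhat /slash0_sum -(perm_big _ Hperm) big_map.
by apply: eq_bigr => j _; rewrite term.
Qed.
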